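(* Fix a run $r$ of a protocol $P$, a node $\theta=\langle i,t\rangle$, and a delay $\Delta>0$ (an integer). For each process $j$ let $t_j$ be the minimal time $l\ge 0$ such that $\langle j,l\rangle\not\rightsquigarrow_r\theta$. Then there exists a run $r'$ with $r'\approx r$ such that for every process $j$: $r_j(m)=r'_j(m)$ for all $m\le t_j$, and $r_j(m)=r'_j(m+\Delta)$ for all $m\ge t_j+1$.
   Context: Model: $n$ processes connected by directed FIFO channels; an environment (adversary) schedules everything. Time is identified with the natural numbers; a run $r=r(0),r(1),\dots$ is an infinite sequence of global states, $r_i(m)$ denotes process $i$'s local state at time $m$, and round $m+1$ transforms $r(m)$ into $r(m+1)$. In each round the environment chooses independently for each process $i$ one of: $\mathtt{move}_i$ ($i$ performs an action allowed by its protocol at its current local state — a local action or sending a message), $\mathtt{skip}_i$ (nothing happens to $i$), $\mathtt{invoke}_i(x)$ ($i$ receives external input $x$), or $\mathtt{deliver}_i$ of a message from some $j$ (delivered if it is the oldest message in transit on the channel from $j$ to $i$). The local state of a process consists of its initial value together with the complete ordered history of all actions it performed, messages it sent and received, and inputs it received. A run of protocol $P=(P_1,\dots,P_n)$ starts in an initial global state and every action performed by every process $i$ is among those allowed by $P_i$ at $i$'s current local state. A node is a process-time pair $\langle p,t\rangle$. Message chains: $\langle p,t\rangle\rightsquigarrow_r\langle q,t'\rangle$ holds if (1a) $p=q$ and $t<t'$, or (1b) $p$ sends a message to $q$ in round $t+1$ of $r$ that is delivered no later than round $t'$, or (2) there is a node $\theta''$ with $\langle p,t\rangle\rightsquigarrow_r\theta''$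 and $\theta''\rightsquigarrow_r\langle q,t'\rangle$. Two runs are locally equivalent, $r\approx r'$, if for every process $j$, a local state of $j$ appears in $r$ iff it appears in $r'$. *)

(* Defs.v *)
From mathcomp Require Import all_boot.
Set Implicit Arguments. Unset Strict Implicit. Unset Printing Implicit Defensive.

Section Model.
(* n processes 'I_n; V = initial values; X = external inputs;
   M = message contents; A = local (non-send) actions. *)
Variables (n : nat) (V X M A : Type).

Inductive event :=
  | EvLocal of A
  | EvSend of 'I_n & M
  | EvRecv of 'I_n & M
  | EvInput of X.

Record lstate := LState { linit : V; lhist : seq event }.

Inductive pact := PLocal of A | PSend of 'I_n & M.

Definition protocol := 'I_n -> lstate -> pact -> Prop.

Definition gstate := 'I_n -> lstate.
Definition run_t := nat -> gstate.   (* r m i = r_i(m) *)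

Definition ev_of_pact (a : pact) : event :=
  match a with PLocal x => EvLocal x | PSend j m => EvSend j m end.

Definition app_ev (s : lstate) (e : event) : lstate :=
  LState (linit s) (rcons (lhist s) e).

Definition sent_to (s : lstate) (q : 'I_n) : seq M :=
  pmap (fun e => match e with
                 | EvSend q' m => if q' == q then Some m else None
                 | _ => None end) (lhist s).

Definition recv_count (s : lstate) (p : 'I_n) : nat :=
  count (fun e => match e with EvRecv p' _ => p' == p | _ => false end) (lhist s).

(* m is the oldest message in transit on the FIFO channel j -> i in g *)
Definition oldest_in_transit (g : gstate) (j i : 'I_n) (m : M) : Prop :=
  exists rest, drop (recv_count (g i) j) (sent_to (g j) i) = m :: rest.

(* What can happen to process i in one round, starting from global state g.
   (deliver with no message in transit on the channel = nothing happens,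
   which is covered by st_skip.) *)
Inductive local_step (P : protocol) (g : gstate) (i : 'I_n) : lstate -> Prop :=
  | st_skip : local_step P g i (g i)
  | st_move (a : pact) : P i (g i) a -> local_step P g i (app_ev (g i) (ev_of_pact a))
  | st_invoke (x : X) : local_step P g i (app_ev (g i) (EvInput x))
  | st_deliver (j : 'I_n) (m : M) :
      oldest_in_transit g j i m -> local_step P g i (app_ev (g i) (EvRecv j m)).

Definition is_run (P : protocol) (r : run_t) : Prop :=
  (forall i, lhist (r 0 i) = [::]) /\
  (forall m i, local_step P (r m) i (r m.+1 i)).

Definition node := ('I_n * nat)%type.

(* In (ch_msg) the message sent by p to q
   in round t+1 is the (k+1)-th one on channel p->q, k = #sent by time t;
   by FIFO it is delivered by round t' iff q has received >= k+1 messages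
   from p at time t'. *)
Inductive chain (r : run_t) : node -> node -> Prop :=
  | ch_local (p : 'I_n) (t t' : nat) : t < t' -> chain r (p, t) (p, t')
  | ch_msg (p q : 'I_n) (t t' : nat) :
      size (sent_to (r t p) q) < size (sent_to (r t.+1 p) q) ->
      size (sent_to (r t.+1 p) q) <= recv_count (r t' q) p ->
      chain r (p, t) (q, t')
  | ch_trans (a b c : node) : chain r a b -> chain r b c -> chain r a c.

Definition loc_equiv (r r' : run_t) : Prop :=
  forall (j : 'I_n) (s : lstate), (exists m, r m j = s) <-> (exists m, r' m j = s).

End Model.

(* Main.v *)
Require Import Defs.
From mathcomp Require Import all_boot.
From mathcomp Require Import zify.

Lemma step_shape n V X M A (P : protocol n V X M A) g i s :
  local_step P g i s -> s = g i \/ exists e, s = app_ev (g i) e.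
Proof. by case=> *; [left | right; eexists ..]. Qed.
Arguments step_shape {n V X M A P g i s}.

Lemma hist_prefix n V X M A (P : protocol n V X M A) (r : run_t n V X M A) p a b :
  is_run P r -> a <= b -> exists u, lhist (r b p) = lhist (r a p) ++ u.
Proof.
move=> [H0 Hs]; elim: b => [|b IH] Hab.
  have -> : a = 0 by lia. by exists [::]; rewrite cats0.
case: (ltnP b a) => Hba.
  have -> : a = b.+1 by lia. by exists [::]; rewrite cats0.
have [u Hu] := IH Hba.
case: (step_shape (Hs b p)) => [-> | [e ->]]; first by exists u.
by exists (rcons u e); rewrite /app_ev /= Hu rcons_cat.
Qed.
Arguments hist_prefix {n V X M A P r} p {a b}.

Lemma sent_prefix n V X M A (s1 s2 : lstate n V X M A) u q :
  lhist s2 = lhist s1 ++ u -> exists v, sent_to s2 q = sent_to s1 q ++ v.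
Proof. by move=> H; rewrite /sent_to H pmap_cat; eexists. Qed.
Arguments sent_prefix {n V X M A s1 s2 u} q.

Lemma sent_growth n V X M A (P : protocol n V X M A) (r : run_t n V X M A) x p q :
  is_run P r -> size (sent_to (r x.+1 p) q) <= (size (sent_to (r x p) q)).+1.
Proof.
move=> [H0 Hs]; case: (step_shape (Hs x p)) => [-> | [e ->]]; first by [].
rewrite /sent_to /app_ev /= -cats1 pmap_cat size_cat.
case: e => [?|q' ?|??|?] /=; try case: (q' == q) => /=; lia.
Qed.
Arguments sent_growth {n V X M A P r} x p q.

Lemma sent_recv n V X M A (s : lstate n V X M A) k msg q :
  sent_to (app_ev s (EvRecv X A k msg)) q = sent_to s q.
Proof. by rewrite /sent_to /app_ev /= -cats1 pmap_cat /= cats0. Qed.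

Lemma recv_recv n V X M A (s : lstate n V X M A) k msg :
  recv_count (app_ev s (EvRecv X A k msg)) k = (recv_count s k).+1.
Proof. by rewrite /recv_count /app_ev /= -cats1 count_cat /= eqxx addn0 addn1. Qed.

Lemma find_cross (g : nat -> nat) c m :
  g 0 <= c -> c < g m -> exists s, s < m /\ g s <= c /\ c < g s.+1.
Proof.
move=> H0; elim: m => [|m IH] Hm; first lia.
case: (ltnP c (g m)) => Hc.
  by have [s [? ?]] := IH Hc; exists s; split => //; lia.
by exists m.
Qed.
Arguments find_cross {g c m}.

Lemma reach_next n V X M A (r : run_t n V X M A) a c :
  chain r a c -> forall j m, a = (j, m) ->
  (forall q, size (sent_to (r m.+1 j) q) <= size (sent_to (r m j) q)) ->
  (j, m.+1) = c \/ chain r (j, m.+1) c.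
Proof.
elim=> {a c}.
- move=> p t t' Htt' j m [<- <-] _.
  case: (ltnP t.+1 t') => H; first by right; apply: ch_local.
  by left; have -> : t' = t.+1 by lia.
- move=> p q t t' H1 H2 j m [<- <-] Hq. have := Hq q. lia.
- move=> a b c _ IH1 Hbc _ j m Ea Hq.
  case: (IH1 j m Ea Hq) => [-> | H]; first by right.
  by right; apply: ch_trans H Hbc.
Qed.

Lemma step_ok n V X M A (P : protocol n V X M A) (r r' : run_t n V X M A)
  (F : 'I_n -> nat -> nat) j m m2 :
  is_run P r ->
  (forall k x, r' x k = r (F k x) k) ->
  r' m j = r m2 j -> r' m.+1 j = r m2.+1 j ->
  (forall k s msg, s < m2 -> r m2.+1 j = app_ev (r m2 j) (EvRecv X A k msg) ->
      chain r (k, s) (j, m2.+1) -> s < F k m) ->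
  local_step P (r' m) j (r' m.+1 j).
Proof.
move=> Hr Hr' E1 E2 H. rewrite E2.
have Hrun := Hr. case: Hr => H0 Hs.
have Hst := Hs m2 j. remember (r m2.+1 j) as s0 eqn:Es.
destruct Hst as [| a Ha | x | k msg Hot].
- rewrite -E1; exact: st_skip.
- rewrite -E1; apply: st_move; by rewrite E1.
- rewrite -E1; exact: st_invoke.
- rewrite -E1; apply: st_deliver.
  case: Hot => rest Hd.
  set c := recv_count (r m2 j) k in Hd.
  set g := fun x => size (sent_to (r x k) j).
  have Hg0 : g 0 <= c by rewrite /g /sent_to H0.
  have Hgm : c < g m2.
    have := f_equal size Hd; rewrite size_drop /= /g; lia.
  have [s [Hsm [Hs1 Hs2]]] := find_cross Hg0 Hgm.
  have Hch : chain r (k, s) (j, m2.+1).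
    apply: ch_msg; first by rewrite /g /= in Hs1 Hs2; lia.
    rewrite -Es recv_recv -/c.
    have := sent_growth s k j Hrun. rewrite /g /= in Hs1 Hs2. lia.
  have HF := H k s msg Hsm erefl Hch.
  have [u1 Hu1] := hist_prefix k Hrun HF.
  have [u2 Hu2] := hist_prefix k Hrun Hsm.
  have [v1 Hv1] := sent_prefix j Hu1.
  have [v2 Hv2] := sent_prefix j Hu2.
  exists (drop c.+1 (sent_to (r s.+1 k) j) ++ v1).
  rewrite /g /= in Hs2.
  rewrite Hv2 drop_cat ifT in Hd; last lia.
  rewrite (drop_nth msg Hs2) /= in Hd. case: Hd => Hm _.
  rewrite E1 -/c Hr' Hv1 drop_cat ifT; last lia.
  by rewrite (drop_nth msg Hs2) Hm.
Qed.

Lemma no_chain_after n V X M A (r : run_t n V X M A) k s tk th :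
  ~ chain r (k, tk) th -> tk <= s -> chain r (k, s) th -> False.
Proof.
move=> Hn Hle Hc; case: (ltnP tk s) => H.
  by apply: Hn; apply: ch_trans (ch_local r k H) Hc.
have E : s = tk by lia.
by subst s; apply: Hn.
Qed.

Theorem theorem6 (n : nat) (V X M A : Type) (P : protocol n V X M A)
  (r : run_t n V X M A) (i : 'I_n) (t : nat) (Delta : nat) (tj : 'I_n -> nat) :
  is_run P r ->
  0 < Delta ->
  (* tj j is the minimal l >= 0 with <j,l> not ~>_r <i,t> *)
  (forall j : 'I_n, ~ chain r (j, tj j) (i, t) /\
                     (forall l, l < tj j -> chain r (j, l) (i, t))) ->
  exists r' : run_t n V X M A,
    is_run P r' /\ loc_equiv r r' /\
    forall j : 'I_n,
      (forall m, m <= tj j -> r m j = r' m j) /\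
      (forall m, tj j + 1 <= m -> r m j = r' (m + Delta) j).
Proof.
move=> Hr HD Hmin.
pose F := fun (k : 'I_n) (m : nat) => if m <= tj k then m else maxn (tj k) (m - Delta).
have Fle : forall k m, m <= tj k -> F k m = m.
  by move=> k m H; rewrite /F H.
have Fgt : forall k m, tj k < m -> F k m = maxn (tj k) (m - Delta).
  by move=> k m H; rewrite /F leqNgt H.
have Fge : forall k m, F k m >= minn m (maxn (tj k) (m - Delta)).
  move=> k m; case: (leqP m (tj k)) => H; [rewrite Fle // | rewrite Fgt //]; lia.
exists (fun m k => r (F k m) k).
have Hrun := Hr. case: Hr => H0 Hs.
split; [split|split].
- by move=> k /=; rewrite Fle.
- move=> m j.
  case: (ltnP m (tj j)) => HA.
    apply: (@step_ok _ _ _ _ _ P r (fun m k => r (F k m) k) F j m m Hrun) => //=.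
    + by rewrite Fle //; lia.
    + by rewrite Fle.
    move=> k s msg Hsm Erecv Hch.
    have [Hnk _] := Hmin k.
    have Hjm := (Hmin j).2 m HA.
    have Hreach := @reach_next _ _ _ _ _ r _ _ Hjm j m erefl.
    have Hcs : chain r (k, s) (i, t).
      case: Hreach.
      + by move=> q; rewrite Erecv sent_recv.
      + by move=> <-.
      + by move=> Hc; apply: ch_trans Hch Hc.
    case: (ltnP s (tj k)) => Hsk; last by case: (@no_chain_after _ _ _ _ _ r k s (tj k) (i, t) Hnk Hsk Hcs).
    have := Fge k m. lia.
  case: (leqP (m.+1 - Delta) (tj j)) => HB.
    have -> : F j m.+1 = F j m.
      rewrite (Fgt j m.+1); last lia.
      case: (leqP m (tj j)) => H; [rewrite Fle // | rewrite Fgt //]; lia.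
    exact: st_skip.
  apply: (@step_ok _ _ _ _ _ P r (fun m k => r (F k m) k) F j m (m - Delta) Hrun) => //=.
  + by rewrite Fgt; [congr (r _ j); lia | lia].
  + by rewrite Fgt; [congr (r _ j); lia | lia].
  move=> k s msg Hsm _ _. have := Fge k m. lia.
- move=> j s; split => [[m <-] | [m <-]]; last by exists (F j m).
  case: (leqP m (tj j)) => H; first by exists m; rewrite Fle.
  by exists (m + Delta); rewrite Fgt; [congr (r _ j); lia | lia].
- move=> j; split => m Hm /=.
    by rewrite Fle.
  by rewrite Fgt; [congr (r _ j); lia | lia].
Qed.
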